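(* Let $A$ be a commutative ring with at least $4$ elements, and let $\tilde{\mathcal P}(A)=\mathrm{coker}(\delta:\mathbb Z[X_5]\to\mathbb Z[X_4])$, a right $\mathrm{GL}_2(A)$-module. Then $\mathcal{RP}(A)\cong\tilde{\mathcal P}(A)_{\mathrm{SL}_2(A)}$ as $\mathcal R_A$-modules, and $\mathcal P(A)\cong\tilde{\mathcal P}(A)_{\mathrm{GL}_2(A)}$ as abelian groups. Explicitly, the class of $(\bar{\mathbf u}_1,\ldots,\bar{\mathbf u}_4)$ corresponds to $\left\langle\frac{d(\mathbf u_1,\mathbf u_3)d(\mathbf u_1,\mathbf u_2)}{d(\mathbf u_2,\mathbf u_3)}\right\rangle\left[\frac{d(\mathbf u_1,\mathbf u_4)d(\mathbf u_2,\mathbf u_3)}{d(\mathbf u_2,\mathbf u_4)d(\mathbf u_1,\mathbf u_3)}\right]$, where $d(\mathbf u,\mathbf v)$ is the determinant of the matrix with rows $\mathbf u,\mathbf v$.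
   Context: For a commutative ring $A$: $A^\times$ units; $G_A=A^\times/(A^\times)^2$ with classes $\langle x\rangle$; $\mathcal R_A=\mathbb Z[G_A]$; $W_A=\{u\in A^\times:1-u\in A^\times\}$. $\mathcal{RP}(A)$ is the $\mathcal R_A$-module generated by $[x]$, $x\in W_A$, with relations $[x]-[y]+\langle x\rangle[y/x]-\langle x^{-1}-1\rangle\left[\frac{1-x^{-1}}{1-y^{-1}}\right]+\langle 1-x\rangle\left[\frac{1-x}{1-y}\right]=0$ for $x,y,y/x\in W_A$; $\mathcal P(A)$ is the abelian group with the same generators and relations with all $\langle\cdot\rangle$ replaced by $1$. $U_2$ is the set of unimodular rows in $A^2$; $\tilde X_n\subset U_2^n$ consists of tuples with any two rows forming an invertible matrix; $X_n=\tilde X_n/(A^\times)^n$, with $\mathrm{GL}_2(A)$ acting on the right diagonally; $\delta$ is the simplicial boundary $\delta(\bar{\mathbf u}_1,\ldots,\bar{\mathbf u}_{n+1})=\sum_i(-1)^{i+1}(\ldots,\widehat{\bar{\mathbf u}_i},\ldots)$. The coinvariants $\tilde{\mathcal P}(A)_{\mathrm{SL}_2(A)}$ are an $\mathcal R_A$-module with $\langle a\rangle$ acting via any matrix of determinant $a$. *)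

(* Defs.v *)
From HB Require Import structures.
From mathcomp Require Import all_boot all_order all_algebra.
Set Implicit Arguments. Unset Strict Implicit. Unset Printing Implicit Defensive.
Import Order.TTheory GRing.Theory Num.Theory.
Local Open Scope ring_scope.

(* Formal expressions in the generators G (elements of Z[G] up to the
   abelian-group axioms, which are imposed by [pres_eq]). *)
Inductive fterm (G : Type) : Type :=
  | FGen of G
  | FZero
  | FAdd of fterm G & fterm G
  | FNeg of fterm G.
Arguments FZero {G}.

Definition FSub {G} (s t : fterm G) := FAdd s (FNeg t).

Definition fsum {G} (l : seq (fterm G)) : fterm G := foldr (@FAdd G) FZero l.

(* pres_eq R s t : s = t in the abelian group <G | R>, i.e. the quotient of
   the free abelian group Z[G] by the subgroup generated by R. *)
Inductive pres_eq {G : Type} (R : fterm G -> Prop) : fterm G -> fterm G -> Prop :=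
  | pe_refl t : pres_eq R t t
  | pe_sym s t : pres_eq R s t -> pres_eq R t s
  | pe_trans s t u : pres_eq R s t -> pres_eq R t u -> pres_eq R s u
  | pe_add s s' t t' : pres_eq R s s' -> pres_eq R t t' ->
                       pres_eq R (FAdd s t) (FAdd s' t')
  | pe_neg s s' : pres_eq R s s' -> pres_eq R (FNeg s) (FNeg s')
  | pe_assoc s t u : pres_eq R (FAdd s (FAdd t u)) (FAdd (FAdd s t) u)
  | pe_comm s t : pres_eq R (FAdd s t) (FAdd t s)
  | pe_zero s : pres_eq R (FAdd FZero s) s
  | pe_negl s : pres_eq R (FAdd (FNeg s) s) FZero
  | pe_rel s : R s -> pres_eq R s FZero.

Fixpoint fmap {G H : Type} (phi : G -> fterm H) (t : fterm G) : fterm H :=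
  match t with
  | FGen g => phi g
  | FZero => FZero
  | FAdd s u => FAdd (fmap phi s) (fmap phi u)
  | FNeg s => FNeg (fmap phi s)
  end.

Section Bloch.
Variable A : comUnitRingType.

Definition inW (x : A) : bool := (x \is a GRing.unit) && (1 - x \is a GRing.unit).

(* Generators of RP(A) as an abelian group: <a>[x] with a in A^x, x in W_A. *)
Definition RPgen := {p : A * A | (p.1 \is a GRing.unit) && inW p.2}.

(* <a>[x] when a is a unit and x in W_A, and 0 otherwise (the latter case
   never occurs in the uses below). *)
Definition rpgen (a x : A) : fterm RPgen :=
  match @insub _ (fun p : A * A => (p.1 \is a GRing.unit) && inW p.2) RPgen (a, x) with
  | Some p => FGen p
  | None => FZero
  end.

(* Relations of RP(A) as an abelian group: <a> only depends on the square
   class of a, and all R_A-multiples <g>.(five-term relation). *)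
Inductive RP_rel : fterm RPgen -> Prop :=
  | rp_sq a w x : a \is a GRing.unit -> w \is a GRing.unit -> inW x ->
      RP_rel (FSub (rpgen a x) (rpgen (a * w ^+ 2) x))
  | rp_five g x y : g \is a GRing.unit -> inW x -> inW y -> inW (y / x) ->
      RP_rel (fsum [:: rpgen g x; FNeg (rpgen g y); rpgen (g * x) (y / x);
                       FNeg (rpgen (g * (x^-1 - 1)) ((1 - x^-1) / (1 - y^-1)));
                       rpgen (g * (1 - x)) ((1 - x) / (1 - y))]).

(* Action of <a> in R_A on RP(A). *)
Definition ract (a : A) : fterm RPgen -> fterm RPgen :=
  fmap (fun p : RPgen => rpgen (a * (val p).1) (val p).2).

Definition Pgen := {x : A | inW x}.

Definition pgen (x : A) : fterm Pgen :=
  match @insub _ inW Pgen x with Some p => FGen p | None => FZero end.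

Inductive P_rel : fterm Pgen -> Prop :=
  | p_five x y : inW x -> inW y -> inW (y / x) ->
      P_rel (fsum [:: pgen x; FNeg (pgen y); pgen (y / x);
                      FNeg (pgen ((1 - x^-1) / (1 - y^-1)));
                      pgen ((1 - x) / (1 - y))]).

Definition row2 := 'rV[A]_2.

Definition dd (u v : row2) : A := \det (col_mx u v : 'M[A]_2).

Definition unimodular (u : row2) : Prop := exists c : 'cV[A]_2, u *m c = 1%:M.

Definition Xt (n : nat) :=
  {f : 'I_n -> row2 | (forall i, unimodular (f i)) /\
                      (forall i j, i != j -> (col_mx (f i) (f j) : 'M[A]_2) \in unitmx)}.

(* Relations defining tilde P(A)_H as a quotient of Z[tilde X_4]:
   - passage from tilde X_4 to X_4 (rescaling each row by a unit),
   - the image of delta : Z[X_5] -> Z[X_4],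
   - coinvariants: x - x.M for M in the group H (given as a predicate). *)
Inductive Pt_rel (H : 'M[A]_2 -> Prop) : fterm (Xt 4) -> Prop :=
  | pt_scale (f g : Xt 4) :
      (forall i, exists l : A, l \is a GRing.unit /\ sval g i = l *: sval f i) ->
      Pt_rel H (FSub (FGen f) (FGen g))
  | pt_delta (F : Xt 5) (G : 'I_5 -> Xt 4) :
      (forall i : 'I_5, forall k : 'I_4, sval (G i) k = sval F (lift i k)) ->
      Pt_rel H (fsum [seq (if odd i then FNeg (FGen (G i)) else FGen (G i))
                     | i : 'I_5 <- enum 'I_5])
  | pt_act (f g : Xt 4) (M : 'M[A]_2) : H M ->
      (forall i, sval g i = sval f i *m M) ->
      Pt_rel H (FSub (FGen f) (FGen g)).

Definition SL2 (M : 'M[A]_2) : Prop := \det M = 1.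
Definition GL2 (M : 'M[A]_2) : Prop := M \in unitmx.

Definition i0 : 'I_4 := inord 0.
Definition i1 : 'I_4 := inord 1.
Definition i2 : 'I_4 := inord 2.
Definition i3 : 'I_4 := inord 3.

(* The explicit maps on generators (u_1,...,u_4) = (u i0, ..., u i3). *)
Definition phiRP (f : Xt 4) : fterm RPgen :=
  let u := sval f in
  rpgen (dd (u i0) (u i2) * dd (u i0) (u i1) / dd (u i1) (u i2))
        (dd (u i0) (u i3) * dd (u i1) (u i2) / (dd (u i1) (u i3) * dd (u i0) (u i2))).

Definition phiP (f : Xt 4) : fterm Pgen :=
  let u := sval f in
  pgen (dd (u i0) (u i3) * dd (u i1) (u i2) / (dd (u i1) (u i3) * dd (u i0) (u i2))).

End Bloch.

(* Main.v *)
Require Import Defs.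
From HB Require Import structures.
From mathcomp Require Import all_boot all_order all_algebra.
From mathcomp Require Import ring.
Set Implicit Arguments. Unset Strict Implicit. Unset Printing Implicit Defensive.
Import GRing.Theory.
Local Open Scope ring_scope.

Section Gen.
Variable A : comUnitRingType.

Lemma det2 (M : 'M[A]_2) : \det M = M 0 0 * M 1 1 - M 0 1 * M 1 0.
Proof.
rewrite (expand_det_row _ 0) !big_ord_recl big_ord0 /cofactor !det_mx11 !mxE /=.
rewrite !expr0 !expr1 addr0.
rewrite !mul1r mulN1r mulrN; congr (_ * M _ _ - M _ _ * M _ _); by apply/val_inj. Qed.
End Gen.

Section Rows.
Variable A : comUnitRingType.
Implicit Types u v : row2 A.

Definition mkr (a b : A) : row2 A := \row_(j < 2) (if val j == 0%N then a else b).
Lemma mkr0 a b : mkr a b 0 0 = a. Proof. by rewrite mxE. Qed.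
Lemma mkr1 a b : mkr a b 0 1 = b. Proof. by rewrite mxE. Qed.
Lemma row_mkr u : u = mkr (u 0 0) (u 0 1).
Proof. apply/rowP => j; rewrite mxE; case: j => [[|[|]]] //= ?; congr (u 0 _); exact/val_inj. Qed.
Lemma mkr_eq a b c d : a = c -> b = d -> mkr a b = mkr c d.
Proof. by move=> -> ->. Qed.

Lemma colE0 u v j : (col_mx u v : 'M[A]_2) 0 j = u 0 j.
Proof. rewrite (_ : 0 = @lshift 1 1 0); [exact: col_mxEu | exact/val_inj]. Qed.
Lemma colE1 u v j : (col_mx u v : 'M[A]_2) 1 j = v 0 j.
Proof. rewrite (_ : 1 = @rshift 1 1 0); [exact: col_mxEd | exact/val_inj]. Qed.
Lemma ddE u v : dd u v = u 0 0 * v 0 1 - u 0 1 * v 0 0.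
Proof. by rewrite /dd det2 !colE0 !colE1. Qed.
Lemma ddmk a b c d : dd (mkr a b) (mkr c d) = a * d - b * c.
Proof. by rewrite ddE !mkr0 !mkr1. Qed.
Lemma scaleE l u j : (l *: u) 0 j = l * u 0 j. Proof. by rewrite mxE. Qed.
Lemma mulmxE u (M : 'M[A]_2) j : (u *m M) 0 j = u 0 0 * M 0 j + u 0 1 * M 1 j.
Proof. rewrite mxE !big_ord_recl big_ord0 addr0; congr (_ + u 0 _ * M _ j); exact/val_inj. Qed.
Lemma ddZ l m u v : dd (l *: u) (m *: v) = l * m * dd u v.
Proof. rewrite !ddE !scaleE; ring. Qed.
Lemma ddM u v (M : 'M[A]_2) : dd (u *m M) (v *m M) = dd u v * \det M.
Proof. by rewrite /dd -mul_col_mx det_mulmx. Qed.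
Lemma ddC u v : dd v u = - dd u v. Proof. rewrite !ddE; ring. Qed.
End Rows.

Section Pres.
Variables (G : Type) (R : fterm G -> Prop).
Local Notation "s ~~ t" := (pres_eq R s t) (at level 70).

Lemma pe_addr0 s : FAdd s FZero ~~ s.
Proof. apply: pe_trans (pe_comm _ _ _) (pe_zero _ _). Qed.
Lemma pe_addl s s' t : s ~~ s' -> FAdd s t ~~ FAdd s' t.
Proof. by move=> h; apply: pe_add => //; apply: pe_refl. Qed.
Lemma pe_addr s t t' : t ~~ t' -> FAdd s t ~~ FAdd s t'.
Proof. by move=> h; apply: pe_add => //; apply: pe_refl. Qed.
Lemma pe_sub0 s t : FSub s t ~~ FZero -> s ~~ t.
Proof.
move=> h.
apply: pe_trans (pe_sym (pe_addr0 s)) _.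
apply: pe_trans (pe_addr s (pe_sym (pe_negl R t))) _.
apply: pe_trans (pe_assoc _ _ _ _) _.
apply: pe_trans (pe_addl t h) _.
exact: pe_zero.
Qed.
Lemma pe_fsum_rcons l x : fsum (rcons l x) ~~ FAdd x (fsum l).
Proof.
elim: l => [|y l IH] /=; first exact: pe_refl.
apply: pe_trans (pe_addr y IH) _.
apply: pe_trans (pe_assoc _ _ _ _) _.
apply: pe_trans (pe_addl _ (pe_comm _ _ _)) _.
exact: pe_sym (pe_assoc _ _ _ _).
Qed.
Lemma pe_fsum_rev l : fsum (rev l) ~~ fsum l.
Proof.
elim: l => [|x l IH]; first exact: pe_refl.
rewrite rev_cons; apply: pe_trans (pe_fsum_rcons _ _) _.
exact: pe_addr.
Qed.
End Pres.

Lemma pe_fmap G H (R : fterm G -> Prop) (R' : fterm H -> Prop) (phi : G -> fterm H) :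
  (forall r, R r -> pres_eq R' (fmap phi r) FZero) ->
  forall s t, pres_eq R s t -> pres_eq R' (fmap phi s) (fmap phi t).
Proof.
move=> hR s t; elim => /=.
- move=> ?; exact: pe_refl.
- move=> ? ? _ ?; exact: pe_sym.
- move=> ? ? ? _ h1 _ h2; exact: pe_trans h1 h2.
- move=> ? ? ? ? _ ? _ ?; exact: pe_add.
- move=> ? ? _ ?; exact: pe_neg.
- move=> ? ? ?; exact: pe_assoc.
- move=> ? ?; exact: pe_comm.
- move=> ?; exact: pe_zero.
- move=> ?; exact: pe_negl.
- move=> ? ?; exact: hR.
Qed.

Lemma fmap_comp G H K (phi : G -> fterm H) (psi : H -> fterm K) s :
  fmap psi (fmap phi s) = fmap (fun g => fmap psi (phi g)) s.
Proof. by elim: s => //= [s -> t -> | s ->]. Qed.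

Lemma pe_fmap_id G (R : fterm G -> Prop) (th : G -> fterm G) :
  (forall g, pres_eq R (th g) (FGen g)) -> forall s, pres_eq R (fmap th s) s.
Proof.
move=> h; elim => [g|||] /=.
- exact: h.
- exact: pe_refl.
- move=> s IHs t IHt; exact: pe_add.
- move=> s IHs; exact: pe_neg.
Qed.

Lemma fmap_fsum G H (phi : G -> fterm H) l : fmap phi (fsum l) = fsum (map (fmap phi) l).
Proof. by elim: l => //= x l ->. Qed.

Section X.
Variable A : comUnitRingType.
Implicit Types u v : row2 A.

Definition goodf n (h : 'I_n -> row2 A) :=
  forall i j, i != j -> dd (h i) (h j) \is a GRing.unit.

Lemma good_lt n (h : 'I_n -> row2 A) :
  (forall i j : 'I_n, (i < j)%N -> dd (h i) (h j) \is a GRing.unit) -> goodf h.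
Proof.
move=> H i j; rewrite neq_ltn => /orP [] hij; first exact: H.
by rewrite ddC unitrN; apply: H.
Qed.

Lemma unimod_of u v : dd u v \is a GRing.unit -> unimodular u.
Proof.
move=> hu; exists ((dd u v)^-1 *: \col_(i < 2) (if val i == 0%N then v 0 1 else - v 0 0)).
apply/matrixP => i j; rewrite [i]ord1 [j]ord1 !mxE !big_ord_recl big_ord0 !mxE /=.
have e := ddE u v; rewrite -(mulVr hu); move: (dd u v)^-1 => di.
rewrite e (_ : lift ord0 ord0 = 1 :> 'I_2); last exact/val_inj.
rewrite (_ : ord0 = 0 :> 'I_2) //; ring.
Qed.

Definition oth n (i : 'I_n.+2) : 'I_n.+2 := if i == ord0 then lift ord0 ord0 else ord0.
Lemma oth_neq n (i : 'I_n.+2) : i != oth i.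
Proof. rewrite /oth; case: (i =P ord0) => [->|/eqP] //. Qed.

Lemma mkX_proof n (h : 'I_n.+2 -> row2 A) : goodf h ->
  (forall i, unimodular (h i)) /\
  (forall i j, i != j -> (col_mx (h i) (h j) : 'M[A]_2) \in unitmx).
Proof.
move=> hg; split.
- move=> i; apply: (@unimod_of _ (h (oth i))); apply: hg; exact: oth_neq.
- by move=> i j hij; rewrite unitmxE; apply: hg.
Qed.

Definition mkX n (h : 'I_n.+2 -> row2 A) (hg : goodf h) : Xt A n.+2 :=
  exist _ h (mkX_proof hg).

Lemma goodX n (f : Xt A n) : goodf (sval f).
Proof. by move=> i j hij; rewrite -unitmxE; apply: (proj2 (svalP f)). Qed.

Lemma goodZM n (h h' : 'I_n -> row2 A) (l : 'I_n -> A) (M : 'M[A]_2) :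
  goodf h -> (forall k, l k \is a GRing.unit) -> \det M \is a GRing.unit ->
  (forall k, h' k = l k *: (h k *m M)) -> goodf h'.
Proof.
move=> hg hl hM e i j hij; rewrite !e ddZ ddM !unitrM hM !hl /=.
by rewrite andbT; apply: hg.
Qed.

Lemma sim_act (H : 'M[A]_2 -> Prop) (f g : Xt A 4) (M : 'M[A]_2) (l : 'I_4 -> A) :
  H M -> \det M \is a GRing.unit -> (forall k, l k \is a GRing.unit) ->
  (forall k, sval g k = l k *: (sval f k *m M)) ->
  pres_eq (Pt_rel H) (FGen f) (FGen g).
Proof.
move=> HM hM hl e.
have hg : goodf (fun k => sval f k *m M).
  by apply: (@goodZM _ (sval f) _ (fun=> 1) M (goodX f)) => // k; rewrite ?unitr1 ?scale1r.
pose h := mkX hg.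
apply: (@pe_trans _ _ _ (FGen h)).
- apply: pe_sub0; apply: pe_rel; apply: (@pt_act _ _ f h M) => //.
- apply: pe_sub0; apply: pe_rel; apply: pt_scale => k.
  by exists (l k); split => //; rewrite e.
Qed.

Lemma sim_eq (H : 'M[A]_2 -> Prop) (f g : Xt A 4) :
  (forall k, sval g k = sval f k) -> pres_eq (Pt_rel H) (FGen f) (FGen g).
Proof.
move=> e; apply: pe_sub0; apply: pe_rel; apply: pt_scale => k.
by exists 1; rewrite unitr1 scale1r e.
Qed.

End X.

Section Norm.
Variable A : comUnitRingType.
Variable n : nat.
Variable h : 'I_n.+3 -> row2 A.
Hypothesis hg : goodf h.

Local Notation o k := (@inord n.+2 k).
Local Notation D j k := (dd (h j) (h k)).
Local Notation d01 := (D (o 0) (o 1)).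

Lemma vo k : (k < 3)%N -> nat_of_ord (o k) = k.
Proof. move=> hk; rewrite inordK //; exact: leq_trans hk _. Qed.

Lemma vov k : (k < 3)%N -> val (o k) = k.
Proof. exact: vo. Qed.

Lemma o_neq j k : (j < 3)%N -> (k < 3)%N -> j != k -> o j != o k.
Proof. by move=> hj hk; apply: contra => /eqP /(f_equal (@nat_of_ord _)); rewrite !vo // => ->. Qed.

Lemma uD j k : j != k -> D j k \is a GRing.unit.
Proof. exact: hg. Qed.

Lemma ud01 : d01 \is a GRing.unit.
Proof. by apply: uD; apply: o_neq. Qed.

Definition Mn : 'M[A]_2 := \matrix_(i < 2, j < 2)
  (if val i == 0%N then (if val j == 0%N then h (o 1) 0 1 / d01 else - h (o 0) 0 1)
   else (if val j == 0%N then - h (o 1) 0 0 / d01 else h (o 0) 0 0)).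

Lemma l01 : lift ord0 ord0 = 1 :> 'I_2. Proof. exact/val_inj. Qed.

Lemma Mn_c0 k : (h k *m Mn) 0 0 = - D (o 1) k / d01.
Proof.
rewrite mulmxE !mxE /=; move: (d01^-1) => di; rewrite (ddE (h (o 1)) (h k)); ring.
Qed.
Lemma Mn_c1 k : (h k *m Mn) 0 1 = D (o 0) k.
Proof. rewrite mulmxE !mxE /= ddE; ring. Qed.

Lemma detMn : \det Mn = 1.
Proof.
rewrite det2 !mxE /=.
rewrite -(mulrV ud01); move: (d01^-1) => di; rewrite (ddE (h (o 0)) (h (o 1))); ring.
Qed.

Definition tt k := d01 * D (o 0) k / D (o 1) k.
Definition nr k := if val k == 0%N then mkr 1 0 else if val k == 1%N then mkr 0 (- tt (o 2))
  else mkr 1 (- tt k).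
Definition lam k := if val k == 0%N then 1 else if val k == 1%N then - tt (o 2) / d01
  else - d01 / D (o 1) k.

Lemma tt_unit k : k != o 0 -> k != o 1 -> tt k \is a GRing.unit.
Proof.
move=> h0 h1; rewrite /tt !unitrM unitrV ud01 !uD // eq_sym //.
Qed.

Lemma lam_unit k : lam k \is a GRing.unit.
Proof.
rewrite /lam; case: eqP => [_|/eqP k0]; first exact: unitr1.
have kn0 : k != o 0 by apply: contra k0 => /eqP ->; rewrite vov.
case: eqP => [_|/eqP k1].
  by rewrite unitrM unitrN unitrV ud01 andbT tt_unit // o_neq.
have kn1 : k != o 1 by apply: contra k1 => /eqP ->; rewrite vov.
by rewrite unitrM unitrN unitrV ud01 uD // eq_sym.
Qed.

Lemma nrE k : nr k = lam k *: (h k *m Mn).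
Proof.
rewrite [RHS]row_mkr !scaleE Mn_c0 Mn_c1 /nr /lam.
case: eqP => [k0|/eqP k0].
  have -> : k = o 0 by apply/val_inj; rewrite vov.
  apply: mkr_eq; last by rewrite ddE; ring.
  by rewrite ddC opprK mul1r mulrV // ud01.
have kn0 : k != o 0 by apply: contra k0 => /eqP ->; rewrite vov.
case: eqP => [k1|/eqP k1].
  have -> : k = o 1 by apply/val_inj; rewrite vov.
  apply: mkr_eq; first by rewrite (ddE (h (o 1)) (h (o 1))); ring.
  by rewrite divrK // ud01.
have kn1 : k != o 1 by apply: contra k1 => /eqP ->; rewrite vov.
apply: mkr_eq; last by rewrite /tt; ring.
have u1 : D (o 1) k \is a GRing.unit by apply: uD; rewrite eq_sym.
rewrite -[LHS](mulr1) -{1}(mulrV ud01) -(mulrV u1).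
move: (d01^-1) (D (o 1) k)^-1 => di ei; ring.
Qed.

Lemma good_nr : goodf nr.
Proof.
apply: (goodZM hg (l := lam) (M := Mn)) => //.
- exact: lam_unit.
- by rewrite detMn unitr1.
- exact: nrE.
Qed.

End Norm.

Section Phi.
Variable A : comUnitRingType.
Implicit Types h : 'I_4 -> row2 A.

Definition prefh h := dd (h i0) (h i2) * dd (h i0) (h i1) / dd (h i1) (h i2).
Definition crh h := dd (h i0) (h i3) * dd (h i1) (h i2) / (dd (h i1) (h i3) * dd (h i0) (h i2)).

Lemma phiRPE (f : Xt A 4) : phiRP f = rpgen (prefh (sval f)) (crh (sval f)).
Proof. by []. Qed.
Lemma phiPE (f : Xt A 4) : phiP f = pgen (crh (sval f)).
Proof. by []. Qed.

Definition stdr (a x : A) (k : 'I_4) : row2 A :=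
  match val k with 0 => mkr 1 0 | 1 => mkr 0 (- a) | 2 => mkr 1 (- a) | _ => mkr 1 (- (a * x)) end.

Lemma std0 a x : stdr a x i0 = mkr 1 0. Proof. by rewrite /stdr /= inordK. Qed.
Lemma std1 a x : stdr a x i1 = mkr 0 (- a). Proof. by rewrite /stdr /= inordK. Qed.
Lemma std2 a x : stdr a x i2 = mkr 1 (- a). Proof. by rewrite /stdr /= inordK. Qed.
Lemma std3 a x : stdr a x i3 = mkr 1 (- (a * x)). Proof. by rewrite /stdr /= inordK. Qed.

Lemma goodf_ext n (h h' : 'I_n -> row2 A) : (forall k, h k = h' k) -> goodf h -> goodf h'.
Proof. by move=> e hg i j hij; rewrite -!e; apply: hg. Qed.

Lemma ineq j k : (j < 4)%N -> (k < 4)%N -> j != k -> (inord j : 'I_4) != inord k.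
Proof. by move=> hj hk; apply: contra => /eqP /(f_equal val) /=; rewrite !inordK // => ->. Qed.

Lemma ii k (hk : (k < 4)%N) : Ordinal hk = inord k.
Proof. by apply/val_inj; rewrite /= inordK. Qed.

Lemma norm4 h (hg : goodf h) k : stdr (prefh h) (crh h) k = nr h k.
Proof.
have u := @uD _ _ h hg.
case: k => [[|[|[|[|m]]]] hk] //; rewrite /stdr /nr /= ?ii.
- congr (mkr 0 (- _)); rewrite /prefh /tt; ring.
- congr (mkr 1 (- _)); rewrite /prefh /tt; ring.
- congr (mkr 1 (- _)); rewrite /prefh /crh /tt.
  have u12 : dd (h i1) (h i2) \is a GRing.unit by apply: u; apply: o_neq.
  have u02 : dd (h i0) (h i2) \is a GRing.unit by apply: u; apply: o_neq.
  have u13 : dd (h i1) (h i3) \is a GRing.unit by apply: u; exact: ineq.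
  rewrite invrM //.
  have h1 := mulrV u12; have h2 := mulrV u02.
  move: (dd (h i1) (h i2)) (dd (h i0) (h i2)) h1 h2 => a b h1 h2.
  ring: h1 h2.
Qed.

Lemma stdr_good h : goodf h -> goodf (stdr (prefh h) (crh h)).
Proof.
move=> hg; apply: (goodf_ext (h := nr h)); first by move=> k; rewrite norm4.
exact: good_nr.
Qed.

Lemma stdr_units a x : goodf (stdr a x) -> a \is a GRing.unit /\ inW x.
Proof.
move=> hg.
have h01 := hg i0 i1 (@ineq 0 1 isT isT isT); have h03 := hg i0 i3 (@ineq 0 3 isT isT isT);
have h23 := hg i2 i3 (@ineq 2 3 isT isT isT).
rewrite ?std0 ?std1 ?std2 ?std3 !ddmk in h01 h03 h23.
have ua : a \is a GRing.unit by move: h01; rewrite mul1r mul0r subr0 unitrN.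
split => //; rewrite /inW.
have -> : x \is a GRing.unit.
  by move: h03; rewrite mul1r mul0r subr0 unitrN unitrM ua.
by move: h23; rewrite (_ : _ - _ = a * (1 - x)) ?unitrM ?ua //; ring.
Qed.

Lemma stdr_good2 a x : a \is a GRing.unit -> inW x -> goodf (stdr a x).
Proof.
move=> ua /andP [ux u1x]; apply: good_lt.
case=> [[|[|[|[|m]]]] hi] // [[|[|[|[|m']]]] hj] //= _; rewrite /stdr /= ddmk.
- by rewrite mul1r mul0r subr0 unitrN.
- by rewrite mul1r mul0r subr0 unitrN.
- by rewrite mul1r mul0r subr0 unitrN unitrM ua ux.
- by rewrite mul0r mulr1 opprK add0r.
- by rewrite mul0r mulr1 opprK add0r.
- by rewrite (_ : _ - _ = a * (1 - x)) ?unitrM ?ua //; ring.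
Qed.

Lemma inv_pref h h' (l : 'I_4 -> A) (M : 'M[A]_2) :
  goodf h -> (forall k, l k \is a GRing.unit) -> \det M \is a GRing.unit ->
  (forall k, h' k = l k *: (h k *m M)) ->
  prefh h' = prefh h * (l i0) ^+ 2 * \det M.
Proof.
move=> hg hl hM e; rewrite /prefh !e !ddZ !ddM.
have u12 : dd (h i1) (h i2) \is a GRing.unit by apply: hg; apply: o_neq.
rewrite !invrM ?unitrM ?hl ?u12 ?hM //.
have h1 := mulrV (hl i1); have h2 := mulrV (hl i2); have h3 := mulrV hM.
move: (l i1) (l i2) (\det M) h1 h2 h3 => a b c h1 h2 h3.
ring: h1 h2 h3.
Qed.

Lemma inv_cr h h' (l : 'I_4 -> A) (M : 'M[A]_2) :
  goodf h -> (forall k, l k \is a GRing.unit) -> \det M \is a GRing.unit ->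
  (forall k, h' k = l k *: (h k *m M)) ->
  crh h' = crh h.
Proof.
move=> hg hl hM e; rewrite /crh !e !ddZ !ddM.
have u02 : dd (h i0) (h i2) \is a GRing.unit by apply: hg; apply: o_neq.
have u13 : dd (h i1) (h i3) \is a GRing.unit by apply: hg; exact: ineq.
rewrite !invrM ?unitrM ?hl ?u02 ?u13 ?hM //.
have h0 := mulrV (hl i0); have h1 := mulrV (hl i1); have h2 := mulrV (hl i2);
have h3 := mulrV (hl i3); have h4 := mulrV hM.
move: (l i0) (l i1) (l i2) (l i3) (\det M) h0 h1 h2 h3 h4 => a b c d m h0 h1 h2 h3 h4.
ring: h0 h1 h2 h3 h4.
Qed.

Lemma pref_unit h : goodf h -> prefh h \is a GRing.unit /\ inW (crh h).
Proof. by move=> hg; apply: stdr_units; apply: stdr_good. Qed.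

End Phi.

Section Std5.
Variable A : comUnitRingType.
Variables g x y : A.

Definition s5l : seq (row2 A) :=
  [:: mkr 1 0; mkr 0 (- g); mkr 1 (- g); mkr 1 (- (g * x)); mkr 1 (- (g * y))].
Definition std5r (k : 'I_5) : row2 A := nth 0 s5l k.

Definition r5 (i : 'I_5) (k : 'I_4) := std5r (lift i k).

Lemma vi0 : nat_of_ord i0 = 0%N. Proof. by rewrite inordK. Qed.
Lemma vi1 : nat_of_ord i1 = 1%N. Proof. by rewrite inordK. Qed.
Lemma vi2 : nat_of_ord i2 = 2%N. Proof. by rewrite inordK. Qed.
Lemma vi3 : nat_of_ord i3 = 3%N. Proof. by rewrite inordK. Qed.

Lemma r5E i k : r5 i k = nth 0 s5l (bump i k).
Proof. by []. Qed.

Definition Oi (i : nat) (hi : (i < 5)%N) : 'I_5 := Ordinal hi.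

Hypothesis ug : g \is a GRing.unit.
Hypothesis ux : x \is a GRing.unit.
Hypothesis uy : y \is a GRing.unit.
Hypothesis u1x : 1 - x \is a GRing.unit.
Hypothesis u1y : 1 - y \is a GRing.unit.

Lemma div_eq (n d r : A) : d \is a GRing.unit -> n = r * d -> n / d = r.
Proof. by move=> ud ->; rewrite mulrK. Qed.
Lemma unit_eq (a b : A) : b \is a GRing.unit -> a = b -> a \is a GRing.unit.
Proof. by move=> ? ->. Qed.

Lemma cross (n d n' d' : A) : d \is a GRing.unit -> d' \is a GRing.unit ->
  n * d' = n' * d -> n / d = n' / d'.
Proof. by move=> ud ud' e; rewrite -(mulrK ud' n) e mulrAC mulrK. Qed.

Lemma sqcancel (a u v : A) : u \is a GRing.unit -> v \is a GRing.unit ->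
  a * (u / v) * (v / u) ^+ 2 = a * v / u.
Proof.
move=> uu uv; have h1 := mulrV uu; have h2 := mulrV uv.
move: (u^-1) (v^-1) h1 h2 => ui vi h1 h2; ring: h1 h2.
Qed.

Lemma invsub1 (u : A) : u \is a GRing.unit -> u^-1 - 1 = (1 - u) / u.
Proof. by move=> uu; rewrite mulrBl mul1r mulrV. Qed.
Lemma oneinvsub (u : A) : u \is a GRing.unit -> 1 - u^-1 = (u - 1) / u.
Proof. by move=> uu; rewrite mulrBl mul1r mulrV. Qed.

Lemma divdiv (a b c d : A) : b \is a GRing.unit -> c \is a GRing.unit -> d \is a GRing.unit ->
  (a / b) / (c / d) = (a * d) / (b * c).
Proof.
move=> ub uc ud; rewrite invrM ?unitrV // invrK invrM //.
have h1 := mulrV ub; have h2 := mulrV uc; have h3 := mulrV ud.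
move: (b^-1) (c^-1) h1 h2 h3 => bi ci h1 h2 h3; ring.
Qed.

Ltac sim5 := rewrite /prefh /crh !r5E !vi0 !vi1 !vi2 ?vi3 /= !ddmk.
Ltac hyps5 := have hg := mulrV ug; have hx := mulrV ux; have hy := mulrV uy;
  have h1x := mulrV u1x; have h1y := mulrV u1y.

Lemma pref4 : prefh (r5 (@Oi 4 isT)) = g * 1 ^+ 2.
Proof.
sim5; apply: div_eq; first by apply: (unit_eq ug); ring.
hyps5; ring: hg.
Qed.

Lemma cr4 : crh (r5 (@Oi 4 isT)) = x.
Proof.
sim5; apply: div_eq.
  by apply: (unit_eq (b := - (g * g))); [rewrite unitrN unitrM ug | ring].
hyps5; ring: hg.
Qed.

Lemma pref3 : prefh (r5 (@Oi 3 isT)) = g * 1 ^+ 2.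
Proof.
sim5; apply: div_eq; first by apply: (unit_eq ug); ring.
hyps5; ring: hg.
Qed.

Lemma cr3 : crh (r5 (@Oi 3 isT)) = y.
Proof.
sim5; apply: div_eq.
  by apply: (unit_eq (b := - (g * g))); [rewrite unitrN unitrM ug | ring].
hyps5; ring: hg.
Qed.

Lemma pref2 : prefh (r5 (@Oi 2 isT)) = g * x * 1 ^+ 2.
Proof.
sim5; apply: div_eq; first by apply: (unit_eq ug); ring.
hyps5; ring: hg.
Qed.

Lemma cr2 : crh (r5 (@Oi 2 isT)) = y / x.
Proof.
sim5; apply: div_eq.
  by apply: (unit_eq (b := - (g * g * x))); [rewrite unitrN !unitrM ug ux | ring].
hyps5; ring: hg hx.
Qed.

Lemma pref1 : prefh (r5 (@Oi 1 isT)) = g * (x^-1 - 1) * (x / (1 - x)) ^+ 2.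
Proof.
rewrite invsub1 // sqcancel //.
sim5; apply: cross => //; first by apply: (unit_eq (b := g * (1 - x))); [rewrite unitrM ug u1x | ring].
ring.
Qed.

Lemma cr1 : crh (r5 (@Oi 1 isT)) = (1 - x^-1) / (1 - y^-1).
Proof.
have uy1 : y - 1 \is a GRing.unit by apply: (unit_eq (b := - (1 - y))); [rewrite unitrN | ring].
have ux1 : x - 1 \is a GRing.unit by apply: (unit_eq (b := - (1 - x))); [rewrite unitrN | ring].
rewrite !oneinvsub // divdiv //.
sim5; apply: cross.
- by apply: (unit_eq (b := - (g * g * x * (1 - y)))); [rewrite unitrN !unitrM ug ux u1y | ring].
- by rewrite unitrM ux uy1.
- ring.
Qed.

Lemma pref0 : prefh (r5 (@Oi 0 isT)) = g * (1 - x) * (1 - x)^-1 ^+ 2.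
Proof.
rewrite expr2 mulrA mulrK //.
sim5; apply: cross => //; first by apply: (unit_eq (b := g * (1 - x))); [rewrite unitrM ug u1x | ring].
ring.
Qed.

Lemma cr0 : crh (r5 (@Oi 0 isT)) = (1 - x) / (1 - y).
Proof.
sim5; apply: cross => //.
  by apply: (unit_eq (b := g * g * (1 - y))); [rewrite !unitrM ug u1y | ring].
ring.
Qed.

End Std5.

Section Std5b.
Variable A : comUnitRingType.

Lemma std5_units (g x y : A) : goodf (std5r g x y) ->
  [/\ g \is a GRing.unit, inW x, inW y & inW (y / x)].
Proof.
move=> hg.
have h12 := hg (Oi (isT : (1 < 5)%N)) (Oi (isT : (2 < 5)%N)) isT.
have h03 := hg (Oi (isT : (0 < 5)%N)) (Oi (isT : (3 < 5)%N)) isT.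
have h04 := hg (Oi (isT : (0 < 5)%N)) (Oi (isT : (4 < 5)%N)) isT.
have h23 := hg (Oi (isT : (2 < 5)%N)) (Oi (isT : (3 < 5)%N)) isT.
have h24 := hg (Oi (isT : (2 < 5)%N)) (Oi (isT : (4 < 5)%N)) isT.
have h34 := hg (Oi (isT : (3 < 5)%N)) (Oi (isT : (4 < 5)%N)) isT.
rewrite /std5r /= !ddmk in h12 h03 h04 h23 h24 h34.
have ug : g \is a GRing.unit by apply: unit_eq h12 _; ring.
have ux : x \is a GRing.unit.
  by move: h03; rewrite (_ : _ - _ = - (g * x)) ?unitrN ?unitrM ?ug //; ring.
have uy : y \is a GRing.unit.
  by move: h04; rewrite (_ : _ - _ = - (g * y)) ?unitrN ?unitrM ?ug //; ring.
have u1x : 1 - x \is a GRing.unit.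
  by move: h23; rewrite (_ : _ - _ = g * (1 - x)) ?unitrM ?ug //; ring.
have u1y : 1 - y \is a GRing.unit.
  by move: h24; rewrite (_ : _ - _ = g * (1 - y)) ?unitrM ?ug //; ring.
have uxy : x - y \is a GRing.unit.
  by move: h34; rewrite (_ : _ - _ = g * (x - y)) ?unitrM ?ug //; ring.
split => //; rewrite /inW ?ux ?uy ?u1x ?u1y //.
rewrite unitrM uy unitrV ux /=.
rewrite (_ : 1 - y / x = (x - y) / x) ?unitrM ?uxy ?unitrV ?ux //.
by rewrite mulrBl mulrV.
Qed.

Lemma std5_good (g x y : A) : g \is a GRing.unit -> inW x -> inW y -> inW (y / x) ->
  goodf (std5r g x y).
Proof.
move=> ug /andP [ux u1x] /andP [uy u1y] /andP [_ u1yx].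
have uxy : x - y \is a GRing.unit.
  rewrite (_ : x - y = x * (1 - y / x)) ?unitrM ?ux //.
  by rewrite mulrBr mulr1 mulrCA mulrV // mulr1.
apply: good_lt.
case=> [[|[|[|[|[|m]]]]] hi] // [[|[|[|[|[|m']]]]] hj] //= _; rewrite /std5r /= ddmk.
- by apply: (unit_eq (b := - g)); [rewrite unitrN | ring].
- by apply: (unit_eq (b := - g)); [rewrite unitrN | ring].
- by apply: (unit_eq (b := - (g * x))); [rewrite unitrN unitrM ug | ring].
- by apply: (unit_eq (b := - (g * y))); [rewrite unitrN unitrM ug | ring].
- by apply: (unit_eq (b := g)); [ | ring].
- by apply: (unit_eq (b := g)); [ | ring].
- by apply: (unit_eq (b := g)); [ | ring].
- by apply: (unit_eq (b := g * (1 - x))); [rewrite unitrM ug | ring].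
- by apply: (unit_eq (b := g * (1 - y))); [rewrite unitrM ug | ring].
- by apply: (unit_eq (b := g * (x - y))); [rewrite unitrM ug | ring].
Qed.

Lemma good_lift n (h : 'I_n.+1 -> row2 A) (i : 'I_n.+1) :
  goodf h -> goodf (fun k : 'I_n => h (lift i k)).
Proof. by move=> hg j k hjk; apply: hg; rewrite (inj_eq (@lift_inj _ i)). Qed.

End Std5b.

Section RPsec.
Variable A : comUnitRingType.
Local Notation RPe := (pres_eq (@RP_rel A)).

Lemma rpgenE (a x : A) (H : (a \is a GRing.unit) && inW x) :
  rpgen a x = FGen (exist (fun p : A * A => (p.1 \is a GRing.unit) && inW p.2) (a, x) H).
Proof. by rewrite /rpgen insubT. Qed.

Lemma pgenE (x : A) (H : inW x) : pgen x = FGen (exist (fun x => inW x) x H).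
Proof. by rewrite /pgen insubT. Qed.

Lemma rp_sq_eq (a w x : A) : a \is a GRing.unit -> w \is a GRing.unit -> inW x ->
  RPe (rpgen a x) (rpgen (a * w ^+ 2) x).
Proof. by move=> ua uw hx; apply: pe_sub0; apply: pe_rel; apply: rp_sq. Qed.

Lemma rp_inv h h' (l : 'I_4 -> A) (M : 'M[A]_2) :
  goodf h -> (forall k, l k \is a GRing.unit) -> \det M = 1 ->
  (forall k, h' k = l k *: (h k *m M)) ->
  RPe (rpgen (prefh h) (crh h)) (rpgen (prefh h') (crh h')).
Proof.
move=> hg hl hM e.
have uM : \det M \is a GRing.unit by rewrite hM unitr1.
rewrite (inv_pref hg hl uM e) (inv_cr hg hl uM e) hM mulr1.
have [ua hx] := pref_unit hg.
exact: rp_sq_eq.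
Qed.

Lemma rp_step h (a w c : A) : goodf h -> w \is a GRing.unit ->
  prefh h = a * w ^+ 2 -> crh h = c -> RPe (rpgen (prefh h) (crh h)) (rpgen a c).
Proof.
move=> hg uw ep ec; have [ua hx] := pref_unit hg.
rewrite ep ec in ua hx *.
have ua' : a \is a GRing.unit by move: ua; rewrite unitrM => /andP [].
exact: pe_sym (rp_sq_eq ua' uw hx).
Qed.

Lemma pe_fsum_cons (G : Type) (R : fterm G -> Prop) s t l l' :
  pres_eq R s t -> pres_eq R (fsum l) (fsum l') -> pres_eq R (fsum (s :: l)) (fsum (t :: l')).
Proof. by move=> h1 h2; apply: pe_add. Qed.

Lemma enum5 : enum 'I_5 = [:: Oi (isT : (0 < 5)%N); Oi (isT : (1 < 5)%N);
  Oi (isT : (2 < 5)%N); Oi (isT : (3 < 5)%N); Oi (isT : (4 < 5)%N)].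
Proof. by apply: (inj_map val_inj); rewrite val_enum_ord. Qed.

Lemma ii5 k (hk : (k < 5)%N) : Ordinal hk = inord k.
Proof. by apply/val_inj; rewrite /= inordK. Qed.

Section Delta.
Variables (F : Xt A 5) (G : 'I_5 -> Xt A 4).
Hypothesis eG : forall i k, sval (G i) k = sval F (lift i k).

Let h := sval F.
Let hg : goodf h := goodX F.
Let g := tt h (inord 2).
Let x := tt h (inord 3) / g.
Let y := tt h (inord 4) / g.

Lemma ug5 : g \is a GRing.unit.
Proof. by apply: tt_unit => //; apply: o_neq. Qed.

Lemma std5_nr k : std5r g x y k = nr h k.
Proof.
case: k => [[|[|[|[|[|m]]]]] hk] //; rewrite /std5r /nr /= ?ii5 //.
- by rewrite /x mulrC divrK // ug5.
- by rewrite /y mulrC divrK // ug5.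
Qed.

Lemma good5 : goodf (std5r g x y).
Proof. by apply: (goodf_ext (h := nr h)); [move=> k; rewrite std5_nr | apply: good_nr]. Qed.

Lemma phiG i : RPe (phiRP (G i)) (rpgen (prefh (r5 g x y i)) (crh (r5 g x y i))).
Proof.
rewrite phiRPE; apply: (rp_inv (l := fun k => lam h (lift i k)) (M := Mn h)).
- exact: goodX.
- by move=> k; apply: lam_unit.
- exact: detMn.
- move=> k; rewrite /r5 std5_nr nrE; last exact: hg. by rewrite (eG i k).
Qed.

Lemma delta_RP :
  RPe (fmap (@phiRP A) (fsum [seq (if odd i then FNeg (FGen (G i)) else FGen (G i))
                     | i : 'I_5 <- enum 'I_5])) FZero.
Proof.
have [ug ux uy uyx] := std5_units good5.
have [ux' u1x] := andP ux; have [uy' u1y] := andP uy.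
have gr i : goodf (r5 g x y i) by apply: good_lift; exact: good5.
rewrite enum5 fmap_fsum.
apply: pe_trans _ (pe_trans (pe_fsum_rev _ _) (pe_rel (rp_five ug ux uy uyx))).
rewrite /=.
apply: pe_add.
  apply: pe_trans (phiG _) _; apply: (rp_step (w := (1 - x)^-1) (gr _)).
  - by rewrite unitrV.
  - by apply: pref0.
  - by apply: cr0.
apply: pe_add.
  apply: pe_neg; apply: pe_trans (phiG _) _; apply: (rp_step (w := x / (1 - x)) (gr _)).
  - by rewrite unitrM ux' unitrV.
  - by apply: pref1.
  - by apply: cr1.
apply: pe_add.
  apply: pe_trans (phiG _) _; apply: (rp_step (w := 1) (gr _)).
  - by rewrite unitr1.
  - by apply: pref2.
  - by apply: cr2.
apply: pe_add.
  apply: pe_neg; apply: pe_trans (phiG _) _; apply: (rp_step (w := 1) (gr _)).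
  - by rewrite unitr1.
  - by apply: pref3.
  - by apply: cr3.
apply: pe_add.
  apply: pe_trans (phiG _) _; apply: (rp_step (w := 1) (gr _)).
  - by rewrite unitr1.
  - by apply: pref4.
  - by apply: cr4.
exact: pe_refl.
Qed.

End Delta.
End RPsec.

Section Final.
Variable A : comUnitRingType.
Local Notation RPe := (pres_eq (@RP_rel A)).
Local Notation Pe := (pres_eq (@P_rel A)).
Local Notation PtS := (pres_eq (Pt_rel (@SL2 A))).
Local Notation PtG := (pres_eq (Pt_rel (@GL2 A))).

Definition dmx (s t : A) : 'M[A]_2 :=
  \matrix_(i < 2, j < 2) (if val i == val j then (if val i == 0%N then s else t) else 0).

Lemma mkr_dmx (p q s t : A) : mkr p q *m dmx s t = mkr (p * s) (q * t).
Proof. by rewrite [LHS]row_mkr !mulmxE !mxE /= !mulr0 ?addr0 ?add0r. Qed.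
Lemma scale_mkr (l p q : A) : l *: mkr p q = mkr (l * p) (l * q).
Proof. by rewrite [LHS]row_mkr !scaleE !mkr0 !mkr1. Qed.
Lemma det_dmx s t : \det (dmx s t) = s * t.
Proof. by rewrite det2 !mxE /= mulr0 subr0. Qed.

Lemma pe_subr (G : Type) (R : fterm G -> Prop) s t : pres_eq R s t -> pres_eq R (FSub s t) FZero.
Proof.
move=> h; apply: pe_trans (pe_addl _ h) _.
apply: pe_trans (pe_comm _ _ _) _; exact: pe_negl.
Qed.

Lemma eq_fmap (G H : Type) (phi psi : G -> fterm H) s :
  (forall g, phi g = psi g) -> fmap phi s = fmap psi s.
Proof. by move=> e; elim: s => [g||s IHs t IHt|s IHs] /=; rewrite ?IHs ?IHt ?e. Qed.

Lemma fmap_id (G : Type) (s : fterm G) : fmap (@FGen G) s = s.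
Proof. by elim: s => [g||s IHs t IHt|s IHs] /=; rewrite ?IHs ?IHt. Qed.

Lemma prefh_ext (h h' : 'I_4 -> row2 A) : (forall k, h k = h' k) -> prefh h = prefh h'.
Proof. by move=> e; rewrite /prefh !e. Qed.
Lemma crh_ext (h h' : 'I_4 -> row2 A) : (forall k, h k = h' k) -> crh h = crh h'.
Proof. by move=> e; rewrite /crh !e. Qed.

Lemma stdr_r5 (a x : A) k : stdr a x k = r5 a x x (Oi (isT : (4 < 5)%N)) k.
Proof. by case: k => [[|[|[|[|m]]]] hk]. Qed.

Lemma std_vals (a x : A) : a \is a GRing.unit -> inW x ->
  prefh (stdr a x) = a /\ crh (stdr a x) = x.
Proof.
move=> ua /andP [ux u1x].
rewrite (prefh_ext (stdr_r5 a x)) (crh_ext (stdr_r5 a x)).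
by rewrite (pref4 ua ux ux u1x u1x) (cr4 ua ux ux u1x u1x) expr1n mulr1.
Qed.

Definition stdXa (a x : A) (H : (a \is a GRing.unit) && inW x) : Xt A 4 :=
  mkX (stdr_good2 (andP H).1 (andP H).2).

Lemma sim_sq (a w x : A) H H' : w \is a GRing.unit ->
  PtS (FGen (@stdXa a x H)) (FGen (@stdXa (a * w ^+ 2) x H')).
Proof.
move=> uw.
apply: (sim_act (M := dmx w^-1 w) (l := fun=> w)).
- by rewrite /SL2 det_dmx mulVr.
- by rewrite det_dmx mulVr // unitr1.
- by move=> _.
- have h1 := mulVr uw; move=> k /=.
  case: k => [[|[|[|[|m]]]] hk]; rewrite /stdr /= mkr_dmx scale_mkr; apply: mkr_eq;
  move: (w^-1) h1 => wi h1; ring: h1.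
Qed.

Lemma sim_gl (a b x : A) H H' :
  PtG (FGen (@stdXa a x H)) (FGen (@stdXa b x H')).
Proof.
have ua := (andP H).1; have ub := (andP H').1.
apply: (sim_act (M := dmx 1 (b / a)) (l := fun=> 1)).
- by rewrite /GL2 unitmxE det_dmx mul1r unitrM ub unitrV.
- by rewrite det_dmx mul1r unitrM ub unitrV.
- by move=> _; exact: unitr1.
- have h1 := mulVr ua; move=> k /=.
  case: k => [[|[|[|[|m]]]] hk]; rewrite /stdr /= mkr_dmx scale_mkr; apply: mkr_eq;
  move: (a^-1) h1 => ai h1; ring: h1.
Qed.

Lemma sim_val (a b x y : A) H H' (R : 'M[A]_2 -> Prop) : a = b -> x = y ->
  pres_eq (Pt_rel R) (FGen (@stdXa a x H)) (FGen (@stdXa b y H')).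
Proof. by move=> eab exy; apply: sim_eq => k /=; rewrite eab exy. Qed.

Lemma norm_sim (f : Xt A 4) H :
  PtS (FGen (@stdXa (prefh (sval f)) (crh (sval f)) H)) (FGen f).
Proof.
apply: pe_sym; apply: (sim_act (M := Mn (sval f)) (l := lam (sval f))).
- by rewrite /SL2 (detMn (goodX f)).
- by rewrite (detMn (goodX f)) unitr1.
- by move=> k; apply: lam_unit; apply: goodX.
- by move=> k /=; rewrite norm4 ?nrE //; apply: goodX.
Qed.

Lemma mono_SG s t : PtS s t -> PtG s t.
Proof.
move=> h; rewrite -(fmap_id s) -(fmap_id t); apply: pe_fmap h => r hr.
rewrite fmap_id; apply: pe_rel; case: hr.
- by move=> f g hfg; apply: pt_scale.
- by move=> F G hFG; apply: pt_delta.
- by move=> f g M hM e; apply: (pt_act (M := M)) => //; rewrite /GL2 unitmxE hM unitr1.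
Qed.

End Final.

Section Final2.
Variable A : comUnitRingType.
Local Notation RPe := (pres_eq (@RP_rel A)).
Local Notation Pe := (pres_eq (@P_rel A)).
Local Notation PtS := (pres_eq (Pt_rel (@SL2 A))).
Local Notation PtG := (pres_eq (Pt_rel (@GL2 A))).

Lemma phi_mem (f : Xt A 4) : (prefh (sval f) \is a GRing.unit) && inW (crh (sval f)).
Proof. by have [-> ->] := pref_unit (goodX f). Qed.

Definition psiRP (p : RPgen A) : fterm (Xt A 4) := FGen (@stdXa A (sval p).1 (sval p).2 (proj2_sig p)).

Lemma psi_rpgen (a x : A) H : fmap psiRP (rpgen a x) = FGen (@stdXa A a x H).
Proof. rewrite (rpgenE H); reflexivity. Qed.

Lemma psi_step (f : Xt A 4) (a w c : A) H : w \is a GRing.unit ->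
  prefh (sval f) = a * w ^+ 2 -> crh (sval f) = c ->
  PtS (FGen (@stdXa A a c H)) (FGen f).
Proof.
move=> uw ep ec.
have H' : (a * w ^+ 2 \is a GRing.unit) && inW c by rewrite -ep -ec phi_mem.
apply: pe_trans (sim_sq H H' uw) _.
apply: pe_trans _ (norm_sim (phi_mem f)).
exact: sim_val.
Qed.

Lemma five_mem (g x y : A) : g \is a GRing.unit -> inW x -> inW y -> inW (y / x) ->
  [/\ (g \is a GRing.unit) && inW x, (g \is a GRing.unit) && inW y,
      (g * x \is a GRing.unit) && inW (y / x),
      (g * (x^-1 - 1) \is a GRing.unit) && inW ((1 - x^-1) / (1 - y^-1)) &
      (g * (1 - x) \is a GRing.unit) && inW ((1 - x) / (1 - y))].
Proof.
move=> ug hx hy hyx.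
have [ux u1x] := andP hx; have [uy u1y] := andP hy.
have g5 := std5_good ug hx hy hyx.
have gr i : goodf (r5 g x y i) by apply: good_lift.
have [_ w1] := pref_unit (gr (Oi (isT : (1 < 5)%N))).
have [_ w0] := pref_unit (gr (Oi (isT : (0 < 5)%N))).
rewrite (cr1 ug ux uy u1x u1y) in w1; rewrite (cr0 x ug u1y) in w0.
rewrite ug hx hy hyx w1 w0 !unitrM ug ux u1x invsub1 // unitrM u1x unitrV ux.
by [].
Qed.

Lemma rel_psi r : RP_rel r -> PtS (fmap psiRP r) FZero.
Proof.
case.
- move=> a w x ua uw hx.
  have H1 : (a \is a GRing.unit) && inW x by rewrite ua hx.
  have H2 : (a * w ^+ 2 \is a GRing.unit) && inW x by rewrite unitrM ua unitrX.
  rewrite /FSub; change (PtS (FAdd (fmap psiRP (rpgen a x)) (FNeg (fmap psiRP (rpgen (a * w ^+ 2) x)))) FZero).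
  rewrite (psi_rpgen H1) (psi_rpgen H2); apply: pe_subr; exact: sim_sq.
- move=> g x y ug hx hy hyx.
  have [H0 H1 H2 H3 H4] := five_mem ug hx hy hyx.
  have [ux u1x] := andP hx; have [uy u1y] := andP hy.
  have g5 := std5_good ug hx hy hyx.
  pose F5 : Xt A 5 := mkX g5.
  pose Gi (i : 'I_5) : Xt A 4 := mkX (good_lift i g5).
  have hd := pe_rel (@pt_delta A (@SL2 A) F5 Gi (fun i k => erefl)).
  rewrite fmap_fsum.
  change (PtS (fsum [:: fmap psiRP (rpgen g x); FNeg (fmap psiRP (rpgen g y));
     fmap psiRP (rpgen (g * x) (y / x));
     FNeg (fmap psiRP (rpgen (g * (x^-1 - 1)) ((1 - x^-1) / (1 - y^-1))));
     fmap psiRP (rpgen (g * (1 - x)) ((1 - x) / (1 - y)))]) FZero).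
  rewrite (psi_rpgen H0) (psi_rpgen H1) (psi_rpgen H2) (psi_rpgen H3) (psi_rpgen H4).
  apply: pe_trans _ (pe_trans (pe_fsum_rev _ _) hd).
  rewrite enum5 /=.
  apply: pe_add.
    apply: (psi_step (w := 1)); [exact: unitr1 | by apply: pref4 | by apply: cr4].
  apply: pe_add.
    apply: pe_neg; apply: (psi_step (w := 1)); [exact: unitr1 | by apply: pref3 | by apply: cr3].
  apply: pe_add.
    apply: (psi_step (w := 1)); [exact: unitr1 | by apply: pref2 | by apply: cr2].
  apply: pe_add.
    apply: pe_neg; apply: (psi_step (w := x / (1 - x))).
    + by rewrite unitrM ux unitrV.
    + by apply: pref1.
    + by apply: cr1.
  apply: pe_add.
    apply: (psi_step (w := (1 - x)^-1)).
    + by rewrite unitrV.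
    + by apply: pref0.
    + by apply: cr0.
  exact: pe_refl.
Qed.

Lemma psi_phi (f : Xt A 4) : PtS (fmap psiRP (phiRP f)) (FGen f).
Proof. by rewrite phiRPE (psi_rpgen (phi_mem f)); apply: norm_sim. Qed.

End Final2.

Section Final3.
Variable A : comUnitRingType.
Local Notation RPe := (pres_eq (@RP_rel A)).
Local Notation Pe := (pres_eq (@P_rel A)).
Local Notation PtS := (pres_eq (Pt_rel (@SL2 A))).
Local Notation PtG := (pres_eq (Pt_rel (@GL2 A))).

Definition piRP (p : RPgen A) : fterm (Pgen A) := pgen (sval p).2.

Lemma pi_rpgen (a x : A) (H : (a \is a GRing.unit) && inW x) : fmap piRP (rpgen a x) = pgen x.
Proof. by rewrite (rpgenE H). Qed.

Lemma rel_pi r : RP_rel r -> Pe (fmap piRP r) FZero.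
Proof.
case.
- move=> a w x ua uw hx.
  have H1 : (a \is a GRing.unit) && inW x by rewrite ua hx.
  have H2 : (a * w ^+ 2 \is a GRing.unit) && inW x by rewrite unitrM ua unitrX.
  rewrite /FSub; change (Pe (FAdd (fmap piRP (rpgen a x)) (FNeg (fmap piRP (rpgen (a * w ^+ 2) x)))) FZero).
  rewrite (pi_rpgen H1) (pi_rpgen H2); apply: pe_subr; exact: pe_refl.
- move=> g x y ug hx hy hyx.
  have [H0 H1 H2 H3 H4] := five_mem ug hx hy hyx.
  rewrite fmap_fsum.
  change (Pe (fsum [:: fmap piRP (rpgen g x); FNeg (fmap piRP (rpgen g y));
     fmap piRP (rpgen (g * x) (y / x));
     FNeg (fmap piRP (rpgen (g * (x^-1 - 1)) ((1 - x^-1) / (1 - y^-1))));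
     fmap piRP (rpgen (g * (1 - x)) ((1 - x) / (1 - y)))]) FZero).
  rewrite (pi_rpgen H0) (pi_rpgen H1) (pi_rpgen H2) (pi_rpgen H3) (pi_rpgen H4).
  exact: pe_rel (p_five hx hy hyx).
Qed.

Lemma phiP_pi (f : Xt A 4) : fmap piRP (phiRP f) = phiP f.
Proof. by rewrite phiRPE (pi_rpgen (phi_mem f)) phiPE. Qed.

Lemma memP (x : A) : inW x -> ((1 : A) \is a GRing.unit) && inW x.
Proof. by rewrite unitr1. Qed.

Definition psiP (p : Pgen A) : fterm (Xt A 4) := FGen (@stdXa A 1 (sval p) (memP (proj2_sig p))).

Lemma psiP_pgen (x : A) H : fmap psiP (pgen x) = FGen (@stdXa A 1 x (memP H)).
Proof. by rewrite (pgenE H). Qed.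

Lemma psiP_step (f : Xt A 4) (c : A) H : crh (sval f) = c ->
  PtG (FGen (@stdXa A 1 c H)) (FGen f).
Proof.
move=> ec.
have H' : (prefh (sval f) \is a GRing.unit) && inW c by rewrite -ec phi_mem.
apply: pe_trans (sim_gl H H') _.
apply: pe_trans _ (mono_SG (norm_sim (phi_mem f))).
exact: sim_val.
Qed.

Lemma rel_psiP r : P_rel r -> PtG (fmap psiP r) FZero.
Proof.
case=> x y hx hy hyx.
have ug : (1 : A) \is a GRing.unit := unitr1 _.
have [H0 H1 H2 H3 H4] := five_mem ug hx hy hyx.
have [ux u1x] := andP hx; have [uy u1y] := andP hy.
have g5 := std5_good ug hx hy hyx.
pose F5 : Xt A 5 := mkX g5.
pose Gi (i : 'I_5) : Xt A 4 := mkX (good_lift i g5).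
have hd := mono_SG (pe_rel (@pt_delta A (@SL2 A) F5 Gi (fun i k => erefl))).
rewrite fmap_fsum.
change (PtG (fsum [:: fmap psiP (pgen x); FNeg (fmap psiP (pgen y));
   fmap psiP (pgen (y / x));
   FNeg (fmap psiP (pgen ((1 - x^-1) / (1 - y^-1))));
   fmap psiP (pgen ((1 - x) / (1 - y)))]) FZero).
rewrite (psiP_pgen hx) (psiP_pgen hy) (psiP_pgen (andP H2).2) (psiP_pgen (andP H3).2)
  (psiP_pgen (andP H4).2).
apply: pe_trans _ (pe_trans (pe_fsum_rev _ _) hd).
rewrite enum5 /=.
apply: pe_add; first by apply: psiP_step; apply: cr4.
apply: pe_add; first by apply: pe_neg; apply: psiP_step; apply: cr3.
apply: pe_add; first by apply: psiP_step; apply: cr2.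
apply: pe_add; first by apply: pe_neg; apply: psiP_step; apply: cr1.
apply: pe_add; first by apply: psiP_step; apply: cr0.
exact: pe_refl.
Qed.

Lemma psiP_phiP (f : Xt A 4) : PtG (fmap psiP (phiP f)) (FGen f).
Proof.
have hw : inW (crh (sval f)) by have /andP [] := phi_mem f.
by rewrite phiPE (psiP_pgen hw); apply: psiP_step.
Qed.

Lemma rel_phiRP r : Pt_rel (@SL2 A) r -> RPe (fmap (@phiRP A) r) FZero.
Proof.
case.
- move=> f g hex; have [l hl] := fin_all_exists hex.
  apply: pe_subr; rewrite /= !phiRPE.
  apply: (rp_inv (l := l) (M := 1%:M)).
  + exact: goodX.
  + by move=> k; case: (hl k).
  + exact: det1.
  + by move=> k; rewrite mulmx1; case: (hl k).
- move=> F G eG; exact: delta_RP.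
- move=> f g M hM e; apply: pe_subr; rewrite /= !phiRPE.
  apply: (rp_inv (l := fun=> 1) (M := M)).
  + exact: goodX.
  + by move=> k; exact: unitr1.
  + exact: hM.
  + by move=> k; rewrite scale1r e.
Qed.

Lemma rel_phiP r : Pt_rel (@GL2 A) r -> Pe (fmap (@phiP A) r) FZero.
Proof.
case.
- move=> f g hex; have [l hl] := fin_all_exists hex.
  apply: pe_subr; rewrite /= !phiPE.
  rewrite (@inv_cr _ (sval f) (sval g) l 1%:M); first exact: pe_refl.
  + exact: goodX.
  + by move=> k; case: (hl k).
  + by rewrite det1 unitr1.
  + by move=> k; rewrite mulmx1; case: (hl k).
- move=> F G eG.
  have := pe_fmap rel_pi (delta_RP eG).
  by rewrite fmap_comp (eq_fmap _ phiP_pi).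
- move=> f g M hM e; apply: pe_subr; rewrite /= !phiPE.
  rewrite (@inv_cr _ (sval f) (sval g) (fun=> 1) M); first exact: pe_refl.
  + exact: goodX.
  + by move=> k; exact: unitr1.
  + by rewrite -unitmxE.
  + by move=> k; rewrite scale1r e.
Qed.

End Final3.

Lemma ract_lemma (A : comUnitRingType) (f g : Xt A 4) (M : 'M[A]_2) : M \in unitmx ->
  (forall i, sval g i = sval f i *m M) ->
  pres_eq (@RP_rel A) (phiRP g) (ract (\det M) (phiRP f)).
Proof.
move=> hM e.
have uM : \det M \is a GRing.unit by rewrite -unitmxE.
have e' : forall k, sval g k = (fun=> 1) k *: (sval f k *m M) by move=> k; rewrite scale1r e.
rewrite !phiRPE (inv_pref (goodX f) (fun=> unitr1 _) uM e') (inv_cr (goodX f) (fun=> unitr1 _) uM e').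
rewrite /ract (rpgenE (phi_mem f)) /= expr1n mulr1 mulrC; exact: pe_refl.
Qed.

Theorem mainTheorem14 (A : comUnitRingType)
  (hA : exists a b c e : A, uniq [:: a; b; c; e]) :
  ((forall s t : fterm (Xt A 4), pres_eq (Pt_rel (@SL2 A)) s t ->
       pres_eq (@RP_rel A) (fmap (@phiRP A) s) (fmap (@phiRP A) t)) /\
   (forall s t : fterm (Xt A 4),
       pres_eq (@RP_rel A) (fmap (@phiRP A) s) (fmap (@phiRP A) t) ->
       pres_eq (Pt_rel (@SL2 A)) s t) /\
   (forall r : fterm (RPgen A), exists s : fterm (Xt A 4),
       pres_eq (@RP_rel A) (fmap (@phiRP A) s) r) /\
   (forall (f g : Xt A 4) (M : 'M[A]_2), M \in unitmx ->
       (forall i, sval g i = sval f i *m M) ->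
       pres_eq (@RP_rel A) (phiRP g) (ract (\det M) (phiRP f)))) /\
  ((forall s t : fterm (Xt A 4), pres_eq (Pt_rel (@GL2 A)) s t ->
       pres_eq (@P_rel A) (fmap (@phiP A) s) (fmap (@phiP A) t)) /\
   (forall s t : fterm (Xt A 4),
       pres_eq (@P_rel A) (fmap (@phiP A) s) (fmap (@phiP A) t) ->
       pres_eq (Pt_rel (@GL2 A)) s t) /\
   (forall r : fterm (Pgen A), exists s : fterm (Xt A 4),
       pres_eq (@P_rel A) (fmap (@phiP A) s) r)).
Proof.
split; split; [|split; [|split]| |split].
- exact: pe_fmap (@rel_phiRP A).
- move=> s t h.
  have h1 := pe_fmap (@rel_psi A) h; rewrite !fmap_comp in h1.
  apply: pe_trans (pe_sym (pe_fmap_id (@psi_phi A) s)) (pe_trans h1 (pe_fmap_id (@psi_phi A) t)).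
- elim=> [p||s [s' hs] t [t' ht]|s [s' hs]].
  + case: p => [[a x] H].
    exists (FGen (@stdXa A a x H)) => /=.
    rewrite phiRPE; change (sval (stdXa H)) with (stdr a x).
    have [ua hx] := andP H; have [-> ->] := std_vals ua hx.
    rewrite (rpgenE H); exact: pe_refl.
  + by exists FZero; apply: pe_refl.
  + by exists (FAdd s' t'); apply: pe_add.
  + by exists (FNeg s'); apply: pe_neg.
- exact: ract_lemma.
- exact: pe_fmap (@rel_phiP A).
- move=> s t h.
  have h1 := pe_fmap (@rel_psiP A) h; rewrite !fmap_comp in h1.
  apply: pe_trans (pe_sym (pe_fmap_id (@psiP_phiP A) s)) (pe_trans h1 (pe_fmap_id (@psiP_phiP A) t)).
- elim=> [p||s [s' hs] t [t' ht]|s [s' hs]].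
  + case: p => [x H].
    exists (FGen (@stdXa A 1 x (memP H))) => /=.
    rewrite phiPE; change (sval (stdXa (memP H))) with (stdr 1 x).
    have [_ ->] := std_vals (unitr1 A) H.
    rewrite (pgenE H); exact: pe_refl.
  + by exists FZero; apply: pe_refl.
  + by exists (FAdd s' t'); apply: pe_add.
  + by exists (FNeg s'); apply: pe_neg.
Qed.
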